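(* Let $(\lambda^*,\xi^* )$ be a maximizer of $L$, and let $(\lambda^{(1)},\xi^{(1)})$ be given by $\lambda^{(1)}=0$, $\xi^{(1)}_{ij}=\log\sum_{x_i,x_j}e^{-\eta C_{ij}(x_i,x_j)}$ for $ij\in\mathcal E$ and $\xi^{(1)}_i=\log\sum_xe^{-\eta C_i(x)}$ for $i\in\mathcal V$. Then $L(\lambda^*,\xi^* )-L(\lambda^{(1)},\xi^{(1)})\le\min\big(\|\eta C/d+\exp(-\eta C)\|_1,\,S\big)$, where $S=\sum_{ij\in\mathcal E}\Big[\log\sum_{x_i,x_j}e^{-\eta C_{ij}(x_i,x_j)}+\sum_{x_i,x_j}\frac{\eta}{d^2}C_{ij}(x_i,x_j)\Big]+\sum_{i\in\mathcal V}\Big[\log\sum_xe^{-\eta C_i(x)}+\sum_x\frac{\eta}{d}C_i(x)\Big]$.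
   Context: Let $G=(\mathcal V,\mathcal E)$ be a graph with $\mathcal V=\{1,\dots,n\}$, each vertex on at least one edge, edges written as ordered pairs $ij$, $N(i)$ the neighbours of $i$, $\chi=\{0,\dots,d-1\}$, $\eta>0$, and $C$ a cost vector with components $C_i\in\mathbb R^d$, $C_{ij}\in\mathbb R^{d\times d}$; $\exp$ is entrywise and $\|\cdot\|_1$ is the sum of absolute values of all entries. Dual variables $(\lambda,\xi)$: for each edge $ij$, $\lambda_{ij},\lambda_{ji}\in\mathbb R^d$ (associated with $i$ and $j$ respectively) and $\xi_{ij}\in\mathbb R$; for each vertex $\xi_i\in\mathbb R$. With $\Gamma_{ij}(x_i,x_j)=\exp(-\eta C_{ij}(x_i,x_j)-\lambda_{ij}(x_i)-\lambda_{ji}(x_j)-\xi_{ij})$ and $\Gamma_i(x)=\exp(-\eta C_i(x)-\xi_i+\sum_{j\in N(i)}\lambda_{ij}(x))$, the Lyapunov function is $L(\lambda,\xi)=-\sum_{ij}\sum_{x_i,x_j}\Gamma_{ij}(x_i,x_j)-\sum_i\sum_x\Gamma_i(x)-\sum_{ij}\xi_{ij}-\sum_i\xi_i+\sum_{ij}\sum_{x_i,x_j}e^{-\eta C_{ij}(x_i,x_j)}+\sum_i\sum_xe^{-\eta C_i(x)}$. *)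

(* Defs.v *)
From mathcomp Require Import all_boot all_order all_algebra.
From mathcomp Require Import reals.
From mathcomp Require Import sequences exp.
Set Implicit Arguments. Unset Strict Implicit. Unset Printing Implicit Defensive.
Import Order.TTheory GRing.Theory Num.Theory.
Local Open Scope ring_scope.

(* Vertices V = 'I_n (i.e. {0,..,n-1} instead of {1,..,n}), labels chi = 'I_d.
   Costs: Cv i : 'I_d -> R  (C_i),  Ce i j : 'I_d -> 'I_d -> R (C_ij, used for (i,j) in E).
   Duals: lam i j : 'I_d -> R is lambda_{ij} (associated with vertex i, for the
   edge between i and j); xiE i j is xi_{ij}; xiV i is xi_i. *)

Section Defs.
Variables (R : realType) (n d : nat).

(* E is a set of ordered edges of a simple graph: no loops, each edge
   appears with a single orientation. *)
Definition oriented_simple (E : {set 'I_n * 'I_n}) : Prop :=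
  forall i j : 'I_n, (i, j) \in E -> i != j /\ (j, i) \notin E.

Definition no_isolated (E : {set 'I_n * 'I_n}) : Prop :=
  forall i : 'I_n, exists j : 'I_n, ((i, j) \in E) \/ ((j, i) \in E).

Definition nbr (E : {set 'I_n * 'I_n}) (i : 'I_n) : {set 'I_n} :=
  [set j | ((i, j) \in E) || ((j, i) \in E)].

Definition Gamma_e (eta : R) (Ce : 'I_n -> 'I_n -> 'I_d -> 'I_d -> R)
  (lam : 'I_n -> 'I_n -> 'I_d -> R) (xiE : 'I_n -> 'I_n -> R)
  (i j : 'I_n) (x y : 'I_d) : R :=
  expR (- eta * Ce i j x y - lam i j x - lam j i y - xiE i j).

Definition Gamma_v (E : {set 'I_n * 'I_n}) (eta : R) (Cv : 'I_n -> 'I_d -> R)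
  (lam : 'I_n -> 'I_n -> 'I_d -> R) (xiV : 'I_n -> R) (i : 'I_n) (x : 'I_d) : R :=
  expR (- eta * Cv i x - xiV i + \sum_(j in nbr E i) lam i j x).

Definition Lyap (E : {set 'I_n * 'I_n}) (eta : R) (Cv : 'I_n -> 'I_d -> R)
  (Ce : 'I_n -> 'I_n -> 'I_d -> 'I_d -> R)
  (lam : 'I_n -> 'I_n -> 'I_d -> R) (xiE : 'I_n -> 'I_n -> R) (xiV : 'I_n -> R) : R :=
  - (\sum_(e in E) \sum_(x : 'I_d) \sum_(y : 'I_d) Gamma_e eta Ce lam xiE e.1 e.2 x y)
  - (\sum_(i : 'I_n) \sum_(x : 'I_d) Gamma_v E eta Cv lam xiV i x)
  - (\sum_(e in E) xiE e.1 e.2)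
  - (\sum_(i : 'I_n) xiV i)
  + (\sum_(e in E) \sum_(x : 'I_d) \sum_(y : 'I_d) expR (- eta * Ce e.1 e.2 x y))
  + (\sum_(i : 'I_n) \sum_(x : 'I_d) expR (- eta * Cv i x)).

Definition is_maximizer (E : {set 'I_n * 'I_n}) (eta : R) (Cv : 'I_n -> 'I_d -> R)
  (Ce : 'I_n -> 'I_n -> 'I_d -> 'I_d -> R)
  (lam : 'I_n -> 'I_n -> 'I_d -> R) (xiE : 'I_n -> 'I_n -> R) (xiV : 'I_n -> R) : Prop :=
  forall lam' xiE' xiV', Lyap E eta Cv Ce lam' xiE' xiV' <= Lyap E eta Cv Ce lam xiE xiV.

Definition lam1 : 'I_n -> 'I_n -> 'I_d -> R := fun _ _ _ => 0.
Definition xiE1 (eta : R) (Ce : 'I_n -> 'I_n -> 'I_d -> 'I_d -> R) : 'I_n -> 'I_n -> R :=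
  fun i j => ln (\sum_(x : 'I_d) \sum_(y : 'I_d) expR (- eta * Ce i j x y)).
Definition xiV1 (eta : R) (Cv : 'I_n -> 'I_d -> R) : 'I_n -> R :=
  fun i => ln (\sum_(x : 'I_d) expR (- eta * Cv i x)).

Definition norm1_bound (E : {set 'I_n * 'I_n}) (eta : R) (Cv : 'I_n -> 'I_d -> R)
  (Ce : 'I_n -> 'I_n -> 'I_d -> 'I_d -> R) : R :=
  (\sum_(e in E) \sum_(x : 'I_d) \sum_(y : 'I_d)
     `| eta * Ce e.1 e.2 x y / d%:R + expR (- eta * Ce e.1 e.2 x y) |)
  + (\sum_(i : 'I_n) \sum_(x : 'I_d) `| eta * Cv i x / d%:R + expR (- eta * Cv i x) |).

Definition S_bound (E : {set 'I_n * 'I_n}) (eta : R) (Cv : 'I_n -> 'I_d -> R)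
  (Ce : 'I_n -> 'I_n -> 'I_d -> 'I_d -> R) : R :=
  (\sum_(e in E) (ln (\sum_(x : 'I_d) \sum_(y : 'I_d) expR (- eta * Ce e.1 e.2 x y))
      + \sum_(x : 'I_d) \sum_(y : 'I_d) eta / (d%:R ^+ 2) * Ce e.1 e.2 x y))
  + (\sum_(i : 'I_n) (ln (\sum_(x : 'I_d) expR (- eta * Cv i x))
      + \sum_(x : 'I_d) eta / d%:R * Cv i x)).

End Defs.

(* Main.v *)
Require Import Defs.
From mathcomp Require Import all_boot all_order all_algebra.
From mathcomp Require Import reals.
From mathcomp Require Import sequences exp.
From mathcomp Require Import ring lra.
Import Order.TTheory GRing.Theory Num.Theory.
Local Open Scope ring_scope.

Section H.
Variable R : realType.

Lemma sum_exp_lb (T : finType) (u : T -> R) : (0 < #|T|)%N ->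
  1 + ln (#|T|%:R) + (\sum_k u k) / #|T|%:R <= \sum_k expR (u k).
Proof.
move=> T0; set D : R := #|T|%:R.
have D0 : 0 < D by rewrite ltr0n.
have -> : 1 + ln D + (\sum_k u k) / D = \sum_k (1 + ln D + u k) / D.
  rewrite -mulr_suml big_split /= sumr_const.
  rewrite mulrDl -/D; congr (_ + _).
  rewrite -mulr_natr -/D mulfK // gt_eqF //.
apply: ler_sum => k _.
have -> : expR (u k) = expR (u k + ln D) / D.
  by rewrite expRD lnK ?posrE // mulfK // gt_eqF.
rewrite ler_pM2r ?invr_gt0 //.
by apply: le_trans (expR_ge1Dx _); lra.
Qed.

Lemma ln_le_sub1 (x : R) : 0 < x -> ln x <= x - 1.
Proof. move=> x0; have := expR_ge1Dx (ln x); rewrite lnK ?posrE //; lra. Qed.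

Lemma sum_pos (T : finType) (f : T -> R) : (0 < #|T|)%N -> (forall k, 0 < f k) ->
  0 < \sum_k f k.
Proof.
move=> /card_gt0P [k _] fp; rewrite (bigD1 k) //=.
have := fp k; have : 0 <= \sum_(i | i != k) f i by apply: sumr_ge0 => i _; exact: ltW.
lra.
Qed.

Lemma neg_sum_exp (T : finType) (u : T -> R) xi : (0 < #|T|)%N ->
  - (\sum_k expR (u k - xi)) - xi <= -1 - ln (#|T|%:R) - (\sum_k u k) / #|T|%:R.
Proof.
move=> T0; have := @sum_exp_lb T (fun k => u k - xi) T0.
have D0 : (0 : R) < #|T|%:R by rewrite ltr0n.
rewrite sumrB sumr_const mulrBl.
have -> : xi *+ #|T| / #|T|%:R = xi by rewrite -(mulr_natr xi) mulfK ?gt_eqF.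
lra.
Qed.

Lemma edge_bound (n d : nat) (eta : R) (Ce : 'I_n -> 'I_n -> 'I_d -> 'I_d -> R)
  (lam : 'I_n -> 'I_n -> 'I_d -> R) (xiE : 'I_n -> 'I_n -> R) (i j : 'I_n) :
  (0 < d)%N ->
  - (\sum_x \sum_y Gamma_e eta Ce lam xiE i j x y) - xiE i j <=
  -1 - ln (d%:R ^+ 2) + eta / (d%:R ^+ 2) * (\sum_x \sum_y Ce i j x y)
  + (\sum_x lam i j x + \sum_y lam j i y) / d%:R.
Proof.
move=> d0.
have T0 : (0 < #|{: 'I_d * 'I_d}|)%N by rewrite card_prod card_ord muln_gt0 d0.
have := @neg_sum_exp _ (fun p => - eta * Ce i j p.1 p.2 - lam i j p.1 - lam j i p.2) (xiE i j) T0.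
rewrite card_prod card_ord natrM -expr2.
rewrite /Gamma_e pair_big /=.
have -> : \sum_(p : 'I_d * 'I_d) (- eta * Ce i j p.1 p.2 - lam i j p.1 - lam j i p.2)
   = - eta * (\sum_x \sum_y Ce i j x y) - (\sum_x lam i j x) * d%:R - (\sum_y lam j i y) * d%:R.
  rewrite -(pair_big xpredT xpredT (fun x y => - eta * Ce i j x y - lam i j x - lam j i y)) /=.
  rewrite (eq_bigr (fun x => -eta * \sum_y Ce i j x y - lam i j x *+ d - \sum_y lam j i y)); last first.
    by move=> x _; rewrite !sumrB sumr_const card_ord -mulr_sumr.
  rewrite !sumrB sumr_const card_ord -sumrMnl !mulr_natr -mulr_sumr.
  by rewrite !sumrMnl.
move=> H; apply: le_trans H _.
have dp : (0 : R) < d%:R by rewrite ltr0n.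
have -> : (- eta * (\sum_x \sum_y Ce i j x y) - (\sum_x lam i j x) * d%:R -
     (\sum_y lam j i y) * d%:R) / d%:R ^+ 2 =
  - (eta / d%:R ^+ 2 * (\sum_x \sum_y Ce i j x y))
  - (\sum_x lam i j x + \sum_y lam j i y) / d%:R.
  by field; rewrite gt_eqF.
lra.
Qed.

Lemma vertex_bound (n d : nat) (E : {set 'I_n * 'I_n}) (eta : R) (Cv : 'I_n -> 'I_d -> R)
  (lam : 'I_n -> 'I_n -> 'I_d -> R) (xiV : 'I_n -> R) (i : 'I_n) :
  (0 < d)%N ->
  - (\sum_x Gamma_v E eta Cv lam xiV i x) - xiV i <=
  -1 - ln (d%:R) + eta / d%:R * (\sum_x Cv i x)
  - (\sum_x \sum_(j in nbr E i) lam i j x) / d%:R.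
Proof.
move=> d0.
have T0 : (0 < #|'I_d|)%N by rewrite card_ord.
have := @neg_sum_exp _ (fun x => - eta * Cv i x + \sum_(j in nbr E i) lam i j x) (xiV i) T0.
rewrite card_ord /Gamma_v.
have -> : \sum_x expR (- eta * Cv i x + \sum_(j in nbr E i) lam i j x - xiV i)
  = \sum_x expR (- eta * Cv i x - xiV i + \sum_(j in nbr E i) lam i j x).
  by apply: eq_bigr => x _; congr expR; ring.
rewrite big_split /= -mulr_sumr.
have dp : (0 : R) < d%:R by rewrite ltr0n.
have -> : (- eta * (\sum_x Cv i x) + \sum_x \sum_(j in nbr E i) lam i j x) / d%:R =
  - (eta / d%:R * (\sum_x Cv i x)) + (\sum_x \sum_(j in nbr E i) lam i j x) / d%:R.
  by field; rewrite gt_eqF.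
lra.
Qed.

Lemma nbr_sum (n d : nat) (E : {set 'I_n * 'I_n}) (lam : 'I_n -> 'I_n -> 'I_d -> R) :
  oriented_simple E ->
  \sum_i \sum_x \sum_(j in nbr E i) lam i j x =
  \sum_(e in E) (\sum_x lam e.1 e.2 x + \sum_y lam e.2 e.1 y).
Proof.
move=> Hs.
set F := fun i j => \sum_x lam i j x.
have -> : \sum_i \sum_x \sum_(j in nbr E i) lam i j x =
   \sum_i \sum_j ((if (i, j) \in E then F i j else 0) + (if (j, i) \in E then F i j else 0)).
  apply: eq_bigr => i _; rewrite exchange_big /= big_mkcond /=.
  apply: eq_bigr => j _; rewrite /nbr inE.
  case h1: ((i, j) \in E); case h2: ((j, i) \in E); rewrite /= ?addr0 ?add0r //.
  by have [_ /negP] := Hs _ _ h1; rewrite h2.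
rewrite (eq_bigr _ (fun i _ => big_split _ _ _ _ _)) big_split /=.
rewrite !pair_big /= big_split /=.
rewrite [\sum_(e in E) _]big_mkcond [X in _ = _ + X]big_mkcond /=.
congr (_ + _); first by apply: eq_bigr => -[a b] _.
have sK : cancel (fun p : 'I_n * 'I_n => (p.2, p.1)) (fun p => (p.2, p.1)) by case.
rewrite (reindex_inj (can_inj sK)) /=.
by apply: eq_bigr => -[a b] _.
Qed.

Lemma term_bound (a c t : R) : 0 < t <= 1 -> 0 < a -> 1 <= a + c ->
  (a + c) * t ^+ 2 <= a + c * t.
Proof.
move=> /andP [t0 t1] a0 ac.
have h1 : 0 <= 1 - t by lra.
have h2 : 0 <= a + t * (a + c) by have := mulr_ge0 (ltW t0) (le_trans ler01 ac); lra.
have := mulr_ge0 h1 h2.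
have e : (1 - t) * (a + t * (a + c)) = a + c * t - (a + c) * t ^+ 2 by ring.
by rewrite e subr_ge0.
Qed.

Lemma Te_N (n d : nat) (eta : R) (Ce : 'I_n -> 'I_n -> 'I_d -> 'I_d -> R) (i j : 'I_n) :
  (0 < d)%N ->
  ln (\sum_x \sum_y expR (- eta * Ce i j x y)) - ln (d%:R ^+ 2)
  + eta / (d%:R ^+ 2) * (\sum_x \sum_y Ce i j x y)
  <= \sum_x \sum_y `|eta * Ce i j x y / d%:R + expR (- eta * Ce i j x y)|.
Proof.
move=> d0.
have T0 : (0 < #|'I_d|)%N by rewrite card_ord.
set Z := \sum_x \sum_y expR _.
set SC := \sum_x \sum_y Ce i j x y.
have Z0 : 0 < Z by apply: sum_pos => // x; apply: sum_pos => // y; exact: expR_gt0.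
have dp : (0 : R) < d%:R by rewrite ltr0n.
have d1 : (1 : R) <= d%:R by rewrite ler1n.
set D := d%:R ^+ 2.
have D0 : 0 < D by rewrite exprn_gt0.
have hl : ln Z - ln D <= Z / D - 1.
  rewrite -ln_div ?posrE //; apply: ln_le_sub1; exact: divr_gt0.
set t := d%:R^-1.
have t01 : 0 < t <= 1 by rewrite invr_gt0 dp /= invr_le1 // unitfE gt_eqF.
have tD : t ^+ 2 = D^-1 by rewrite exprVn.
have E1 : \sum_x \sum_y (expR (- eta * Ce i j x y) + eta * Ce i j x y) * t ^+ 2
    = (Z + eta * SC) * t ^+ 2.
  under eq_bigr => x _ do rewrite -mulr_suml big_split /= -mulr_sumr.
  by rewrite -mulr_suml big_split /= -mulr_sumr.
have E2 : \sum_x \sum_y (expR (- eta * Ce i j x y) + eta * Ce i j x y) * t ^+ 2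
   <= \sum_x \sum_y `|eta * Ce i j x y / d%:R + expR (- eta * Ce i j x y)|.
  apply: ler_sum => x _; apply: ler_sum => y _.
  apply: le_trans (ler_norm _).
  rewrite [X in _ <= X]addrC -/t; apply: term_bound => //; first exact: expR_gt0.
  have := expR_ge1Dx (- eta * Ce i j x y); lra.
rewrite E1 tD in E2.
have E3 : (Z + eta * SC) * D^-1 = Z / D + eta / D * SC by ring.
lra.
Qed.

Lemma Te_S (n d : nat) (eta : R) (Ce : 'I_n -> 'I_n -> 'I_d -> 'I_d -> R) (i j : 'I_n) :
  (0 < d)%N ->
  ln (\sum_x \sum_y expR (- eta * Ce i j x y)) - ln (d%:R ^+ 2)
  + eta / (d%:R ^+ 2) * (\sum_x \sum_y Ce i j x y)
  <= ln (\sum_x \sum_y expR (- eta * Ce i j x y))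
      + \sum_x \sum_y eta / (d%:R ^+ 2) * Ce i j x y.
Proof.
move=> d0.
have d1 : (1 : R) <= d%:R ^+ 2 by rewrite exprn_ege1 // ler1n.
have := ln_ge0 d1.
have -> : eta / (d%:R ^+ 2) * (\sum_x \sum_y Ce i j x y) =
   \sum_x \sum_y eta / (d%:R ^+ 2) * Ce i j x y.
  by rewrite mulr_sumr; apply: eq_bigr => x _; rewrite mulr_sumr.
lra.
Qed.

Lemma Tv_N (n d : nat) (eta : R) (Cv : 'I_n -> 'I_d -> R) (i : 'I_n) :
  (0 < d)%N ->
  ln (\sum_x expR (- eta * Cv i x)) - ln (d%:R)
  + eta / d%:R * (\sum_x Cv i x)
  <= \sum_x `|eta * Cv i x / d%:R + expR (- eta * Cv i x)|.
Proof.
move=> d0.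
have T0 : (0 < #|'I_d|)%N by rewrite card_ord.
set Z := \sum_x expR (- eta * Cv i x).
set SC := \sum_x Cv i x.
have Z0 : 0 < Z by apply: sum_pos => // x; exact: expR_gt0.
have dp : (0 : R) < d%:R by rewrite ltr0n.
have hl : ln Z - ln d%:R <= Z / d%:R - 1.
  rewrite -ln_div ?posrE //; apply: ln_le_sub1; exact: divr_gt0.
set t := d%:R^-1.
have t01 : 0 < t <= 1 by rewrite invr_gt0 dp /= invr_le1 ?ler1n // unitfE gt_eqF.
have E1 : \sum_x (expR (- eta * Cv i x) + eta * Cv i x) * t = (Z + eta * SC) * t.
  by rewrite -mulr_suml big_split /= -mulr_sumr.
have E2 : \sum_x (expR (- eta * Cv i x) + eta * Cv i x) * t
   <= \sum_x `|eta * Cv i x / d%:R + expR (- eta * Cv i x)|.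
  apply: ler_sum => x _.
  apply: le_trans (ler_norm _).
  rewrite [X in _ <= X]addrC -/t.
  have a0 := expR_gt0 (- eta * Cv i x).
  have : expR (- eta * Cv i x) * t <= expR (- eta * Cv i x).
    by apply: ler_piMr; [exact: ltW | case/andP: t01].
  move=> h; lra.
rewrite E1 in E2.
have E3 : (Z + eta * SC) * t = Z / d%:R + eta / d%:R * SC by rewrite /t; ring.
rewrite E3 in E2; rewrite /t; lra.
Qed.

Lemma Tv_S (n d : nat) (eta : R) (Cv : 'I_n -> 'I_d -> R) (i : 'I_n) :
  (0 < d)%N ->
  ln (\sum_x expR (- eta * Cv i x)) - ln (d%:R)
  + eta / d%:R * (\sum_x Cv i x)
  <= ln (\sum_x expR (- eta * Cv i x)) + \sum_x eta / d%:R * Cv i x.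
Proof.
move=> d0.
have d1 : (1 : R) <= d%:R by rewrite ler1n.
have := ln_ge0 d1.
rewrite mulr_sumr; lra.
Qed.

Lemma ge1 (n d : nat) (eta : R) (Ce : 'I_n -> 'I_n -> 'I_d -> 'I_d -> R) (i j : 'I_n) :
  (0 < d)%N ->
  \sum_x \sum_y Gamma_e eta Ce (@lam1 R n d) (xiE1 eta Ce) i j x y = 1.
Proof.
move=> d0.
have T0 : (0 < #|'I_d|)%N by rewrite card_ord.
rewrite /Gamma_e /lam1 /xiE1 /=.
set Z := \sum_x \sum_y expR (- eta * Ce i j x y).
have Z0 : 0 < Z by apply: sum_pos => // x; apply: sum_pos => // y; exact: expR_gt0.
have -> : \sum_x \sum_y expR (- eta * Ce i j x y - 0 - 0 - ln Z) = Z / Z.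
  rewrite mulr_suml; apply: eq_bigr => x _; rewrite mulr_suml; apply: eq_bigr => y _.
  by rewrite !subr0 expRB lnK ?posrE.
by rewrite divff // gt_eqF.
Qed.

Lemma gv1 (n d : nat) (E : {set 'I_n * 'I_n}) (eta : R) (Cv : 'I_n -> 'I_d -> R) (i : 'I_n) :
  (0 < d)%N ->
  \sum_x Gamma_v E eta Cv (@lam1 R n d) (xiV1 eta Cv) i x = 1.
Proof.
move=> d0.
have T0 : (0 < #|'I_d|)%N by rewrite card_ord.
rewrite /Gamma_v /lam1 /xiV1 /=.
set Z := \sum_x expR (- eta * Cv i x).
have Z0 : 0 < Z by apply: sum_pos => // x; exact: expR_gt0.
have -> : \sum_x expR (- eta * Cv i x - ln Z + \sum_(j in nbr E i) 0) = Z / Z.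
  rewrite mulr_suml; apply: eq_bigr => x _.
  by rewrite big1 // addr0 expRB lnK ?posrE.
by rewrite divff // gt_eqF.
Qed.

End H.

Theorem lemma2 (R : realType) (n d : nat) (E : {set 'I_n * 'I_n}) (eta : R)
  (Cv : 'I_n -> 'I_d -> R) (Ce : 'I_n -> 'I_n -> 'I_d -> 'I_d -> R)
  (lam : 'I_n -> 'I_n -> 'I_d -> R) (xiE : 'I_n -> 'I_n -> R) (xiV : 'I_n -> R) :
  (0 < d)%N -> 0 < eta ->
  oriented_simple E -> no_isolated E ->
  is_maximizer E eta Cv Ce lam xiE xiV ->
  Lyap E eta Cv Ce lam xiE xiV
    - Lyap E eta Cv Ce (@lam1 R n d) (xiE1 eta Ce) (xiV1 eta Cv)
  <= Num.min (norm1_bound E eta Cv Ce) (S_bound E eta Cv Ce).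
Proof.
move=> d0 eta0 Hs _ _.
pose U (e : 'I_n * 'I_n) := -1 - ln (d%:R ^+ 2) + eta / (d%:R ^+ 2) * (\sum_x \sum_y Ce e.1 e.2 x y).
pose Le (e : 'I_n * 'I_n) := \sum_x lam e.1 e.2 x + \sum_y lam e.2 e.1 y.
pose V (e : 'I_n * 'I_n) := -1 - ln (\sum_x \sum_y expR (- eta * Ce e.1 e.2 x y)).
pose Uv (i : 'I_n) := -1 - ln (d%:R) + eta / d%:R * (\sum_x Cv i x).
pose M (i : 'I_n) := \sum_x \sum_(j in nbr E i) lam i j x.
pose Vv (i : 'I_n) := -1 - ln (\sum_x expR (- eta * Cv i x)).
pose Te (e : 'I_n * 'I_n) := ln (\sum_x \sum_y expR (- eta * Ce e.1 e.2 x y)) - ln (d%:R ^+ 2)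
  + eta / (d%:R ^+ 2) * (\sum_x \sum_y Ce e.1 e.2 x y).
pose Tv (i : 'I_n) := ln (\sum_x expR (- eta * Cv i x)) - ln (d%:R)
  + eta / d%:R * (\sum_x Cv i x).
have h1 : - (\sum_(e in E) \sum_x \sum_y Gamma_e eta Ce lam xiE e.1 e.2 x y)
          - (\sum_(e in E) xiE e.1 e.2) <= \sum_(e in E) U e + (\sum_(e in E) Le e) / d%:R.
  rewrite -sumrN -sumrB mulr_suml -big_split /=.
  apply: ler_sum => e _; exact: edge_bound.
have h2 : - (\sum_i \sum_x Gamma_v E eta Cv lam xiV i x)
          - (\sum_i xiV i) <= \sum_i Uv i - (\sum_i M i) / d%:R.
  rewrite -sumrN -sumrB mulr_suml -sumrB.
  apply: ler_sum => i _; exact: vertex_bound.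
have h3 : - (\sum_(e in E) \sum_x \sum_y Gamma_e eta Ce (@lam1 R n d) (xiE1 eta Ce) e.1 e.2 x y)
          - (\sum_(e in E) xiE1 eta Ce e.1 e.2) = \sum_(e in E) V e.
  rewrite -sumrN -sumrB; apply: eq_bigr => e _; by rewrite ge1.
have h4 : - (\sum_i \sum_x Gamma_v E eta Cv (@lam1 R n d) (xiV1 eta Cv) i x)
          - (\sum_i xiV1 eta Cv i) = \sum_i Vv i.
  rewrite -sumrN -sumrB; apply: eq_bigr => i _; by rewrite gv1.
have h5 : \sum_(e in E) Le e = \sum_i M i by symmetry; exact: (@nbr_sum R n d E lam Hs).
have h6 : \sum_(e in E) Te e = \sum_(e in E) U e - \sum_(e in E) V e.
  by rewrite -sumrB; apply: eq_bigr => e _; rewrite /Te /U /V; ring.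
have h7 : \sum_i Tv i = \sum_i Uv i - \sum_i Vv i.
  by rewrite -sumrB; apply: eq_bigr => i _; rewrite /Tv /Uv /Vv; ring.
have key : Lyap E eta Cv Ce lam xiE xiV
    - Lyap E eta Cv Ce (@lam1 R n d) (xiE1 eta Ce) (xiV1 eta Cv)
    <= \sum_(e in E) Te e + \sum_i Tv i.
  rewrite /Lyap; rewrite h5 in h1; lra.
rewrite le_min; apply/andP; split; apply: le_trans key _; apply: lerD.
- by apply: ler_sum => e _; exact: Te_N.
- by apply: ler_sum => i _; exact: Tv_N.
- by apply: ler_sum => e _; exact: Te_S.
- by apply: ler_sum => i _; exact: Tv_S.
Qed.
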